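(* Let $R$ be a globally perinormal domain and $W$ a multiplicative subset of $R$. Then $R_W$ is globally perinormal.
   Context: All rings are commutative with identity; an overring of a domain $R$ is a ring between $R$ and its fraction field. A ring extension $A \subseteq B$ satisfies going-down if whenever $\mathfrak{p} \subset \mathfrak{q}$ are primes of $A$ and $Q$ is a prime of $B$ with $Q \cap A = \mathfrak{q}$, there is a prime $P \subseteq Q$ of $B$ with $P \cap A = \mathfrak{p}$. A domain $R$ is globally perinormal if every overring $S$ of $R$ such that $R \subseteq S$ satisfies going-down is a localization of $R$ at some multiplicative set. *)

(* Defs.v *)
From mathcomp Require Import all_boot all_algebra.
Set Implicit Arguments. Unset Strict Implicit. Unset Printing Implicit Defensive.
Import GRing.Theory.
Local Open Scope ring_scope.

Section SubringsOfField.
Variable K : fieldType.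

Definition subring (A : K -> Prop) : Prop :=
  A 1 /\ (forall x y, A x -> A y -> A (x - y)) /\
  (forall x y, A x -> A y -> A (x * y)).

Definition frac_in (A : K -> Prop) (x : K) : Prop :=
  exists a b, A a /\ A b /\ b != 0 /\ x = a / b.

Definition overring (A S : K -> Prop) : Prop :=
  subring S /\ (forall x, A x -> S x) /\ (forall x, S x -> frac_in A x).

Definition prime_ideal (S P : K -> Prop) : Prop :=
  (forall x, P x -> S x) /\ P 0 /\
  (forall x y, P x -> P y -> P (x - y)) /\
  (forall s x, S s -> P x -> P (s * x)) /\
  ~ P 1 /\
  (forall x y, S x -> S y -> P (x * y) -> P x \/ P y).

Definition contracts_to (A Q p : K -> Prop) : Prop :=
  forall x, (Q x /\ A x) <-> p x.

Definition going_down (A S : K -> Prop) : Prop :=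
  forall p q Q : K -> Prop,
    prime_ideal A p -> prime_ideal A q -> (forall x, p x -> q x) ->
    prime_ideal S Q -> contracts_to A Q q ->
    exists P : K -> Prop, prime_ideal S P /\ (forall x, P x -> Q x) /\
      contracts_to A P p.

Definition mult_subset (A T : K -> Prop) : Prop :=
  (forall t, T t -> A t) /\ T 1 /\ ~ T 0 /\
  (forall s t, T s -> T t -> T (s * t)).

Definition localization (A T : K -> Prop) (x : K) : Prop :=
  exists a t, A a /\ T t /\ x = a / t.

Definition globally_perinormal (A : K -> Prop) : Prop :=
  forall S, overring A S -> going_down A S ->
    exists T, mult_subset A T /\ (forall x, S x <-> localization A T x).

End SubringsOfField.

(* A domain R, viewed as its image in its fraction field {fraction R}. *)
Definition dom_image (R : idomainType) (x : {fraction R}) : Prop :=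
  exists a : R, x = FracField.tofrac a.

Definition globally_perinormal_dom (R : idomainType) : Prop :=
  globally_perinormal (@dom_image R).

Definition mult_subset_dom (R : idomainType) (W : R -> Prop) : Prop :=
  W 1 /\ ~ W 0 /\ (forall s t, W s -> W t -> W (s * t)).

(* R_W as a subring of {fraction R} (which is also its fraction field). *)
Definition loc_dom (R : idomainType) (W : R -> Prop) (x : {fraction R}) : Prop :=
  exists a w : R, W w /\ x = FracField.tofrac a / FracField.tofrac w.

(* Main.v *)
Require Import Defs.
From mathcomp Require Import all_boot all_algebra.
From mathcomp Require Import ring.
Set Implicit Arguments. Unset Strict Implicit. Unset Printing Implicit Defensive.
Import GRing.Theory.
Local Open Scope ring_scope.

Section Gen.
Variable F : fieldType.
Lemma g_div (a y b v : F) : y != 0 -> v != 0 -> b != 0 ->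
  (a / y) / (b / v) = (a * v) / (b * y).
Proof. move=> y0 v0 b0. field. by rewrite y0 v0 b0. Qed.
Lemma g_sub1 (a u b v : F) : u != 0 -> v != 0 ->
  a / u - b / v = (v * a - u * b) / (u * v).
Proof. move=> u0 v0. field. by rewrite u0 v0. Qed.
Lemma g_sub2 (a u b v : F) : u != 0 -> v != 0 ->
  a / u - b / v = (a * v - b * u) / (u * v).
Proof. move=> u0 v0. field. by rewrite u0 v0. Qed.
Lemma g_mul (a u b v : F) : u != 0 -> v != 0 ->
  a / u * (b / v) = (a * b) / (u * v).
Proof. move=> u0 v0. field. by rewrite u0 v0. Qed.
Lemma g_E (a u b v w : F) : u != 0 -> v != 0 ->
  a * b * w = (a / u * (b / v)) * w * (u * v).
Proof. move=> u0 v0. field. by rewrite u0 v0. Qed.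
End Gen.

Section Aux.
Variable R : idomainType.
Variable W : R -> Prop.
Hypothesis hW : mult_subset_dom W.
Local Notation K := {fraction R}.
Local Notation tf := (@FracField.tofrac R).
Local Notation D := (@dom_image R).
Local Notation L := (@loc_dom R W).

Definition Wk (y : K) := exists w, W w /\ y = tf w.

Lemma D1 : D 1. Proof. by exists 1; rewrite rmorph1. Qed.
Lemma D0 : D 0. Proof. by exists 0; rewrite rmorph0. Qed.
Lemma DM x y : D x -> D y -> D (x * y).
Proof. by move=> [a ->] [b ->]; exists (a * b); rewrite rmorphM. Qed.
Lemma DB x y : D x -> D y -> D (x - y).
Proof. by move=> [a ->] [b ->]; exists (a - b); rewrite rmorphB. Qed.

Lemma Wk_neq0 y : Wk y -> y != 0.
Proof.
move=> [w [Ww ->]]; rewrite tofrac_eq0; apply/eqP => w0.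
by case: hW => _ [H _]; apply: H; rewrite -w0.
Qed.
Lemma Wk_D y : Wk y -> D y. Proof. by move=> [w [_ ->]]; exists w. Qed.
Lemma Wk1 : Wk 1. Proof. by exists 1; case: hW => h _; rewrite rmorph1. Qed.
Lemma WkM x y : Wk x -> Wk y -> Wk (x * y).
Proof.
move=> [a [Ha ->]] [b [Hb ->]]; exists (a * b); rewrite rmorphM; split=> //.
by case: hW => _ [_ H]; apply: H.
Qed.

Lemma LE x : L x <-> exists a y, D a /\ Wk y /\ x = a / y.
Proof.
split.
  by move=> [a [w [Ww ->]]]; exists (tf a), (tf w); split; [exists a|split=>//; exists w].
by move=> [a [y [[a' ->] [[w [Ww ->]] ->]]]]; exists a', w.
Qed.

Lemma D_L x : D x -> L x.
Proof. by move=> Dx; apply/LE; exists x, 1; split=>//; split; [apply: Wk1|rewrite divr1]. Qed.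

Lemma Wk_invL y : Wk y -> L (y^-1).
Proof. by move=> Wy; apply/LE; exists 1, y; split; [apply: D1|split=>//; rewrite div1r]. Qed.

Lemma L_frac x : frac_in L x -> frac_in D x.
Proof.
move=> [a [b [/LE [a1 [y1 [Da1 [Wy1 ->]]]] [/LE [b1 [y2 [Db1 [Wy2 ->]]]] [b0 ->]]]]].
have y10 := Wk_neq0 Wy1; have y20 := Wk_neq0 Wy2.
have b10 : b1 != 0 by apply: contraNneq b0 => ->; rewrite mul0r.
exists (a1 * y2), (b1 * y1); split; first by apply: DM => //; apply: Wk_D.
split; first by apply: DM => //; apply: Wk_D.
split; first by rewrite mulf_neq0.
exact: g_div.
Qed.

End Aux.


Theorem proposition6p1 (R : idomainType) (W : R -> Prop) :
  globally_perinormal_dom R -> mult_subset_dom W ->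
  globally_perinormal (@loc_dom R W).
Proof.
move=> gp hW S [subS [LS SL]] gdS.
have DS x : dom_image x -> S x by move=> /(D_L hW) /LS.
have WkS y : Wk W y -> S y^-1 by move=> /Wk_invL /LS.
case: subS => [S1 [SB SM]].
have ovD : overring (@dom_image R) S.
  split; first by [].
  by split=> // x /SL; apply: (L_frac hW).
have gdD : going_down (@dom_image R) S.
  move=> p q Q pp pq pq_sub pQ cQ.
  have WnQ y : Wk W y -> ~ Q y.
    move=> Wy Qy; case: pQ => [_ [_ [_ [Qabs [Q1 _]]]]]; apply: Q1.
    have := Qabs _ _ (WkS _ Wy) Qy; by rewrite mulVf // (Wk_neq0 hW Wy).
  have Wnp y : Wk W y -> ~ p y.
    move=> Wy py; apply: (WnQ _ Wy); by case: ((cQ y).2 (pq_sub _ py)).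
  pose p' := fun x : {fraction R} => exists a y, p a /\ Wk W y /\ x = a / y.
  pose q' := fun x => Q x /\ loc_dom W x.
  case: pp => [pD [p0 [pB [pabs [p1 pprime]]]]].
  have p'L x : p' x -> loc_dom W x.
    by move=> [a [y [pa [Wy ->]]]]; apply/LE; exists a, y; split=> //; apply: pD.
  have p'p x : p' x -> dom_image x -> p x.
    move=> [a [y [pa [Wy ->]]]] Dx.
    have y0 := Wk_neq0 hW Wy.
    have : p (a / y * y) by rewrite divfK.
    case/(pprime _ _ Dx (Wk_D Wy)) => // /(Wnp _ Wy) [].
  have pp' x : p x -> p' x.
    by move=> px; exists x, 1; split=> //; split; [apply: (Wk1 hW)|rewrite divr1].
  have prp' : prime_ideal (loc_dom W) p'.
    split; first exact: p'L.
    split; first exact: pp'.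
    split.
      move=> x y [a [u [pa [Wu ->]]]] [b [v [pb [Wv ->]]]].
      have u0 := Wk_neq0 hW Wu; have v0 := Wk_neq0 hW Wv.
      exists (v * a - u * b), (u * v); split.
        by apply: pB; [apply: (pabs v a (Wk_D Wv)) | apply: (pabs u b (Wk_D Wu))].
      split; first exact: (WkM hW).
      exact: g_sub1.
    split.
      move=> s x /LE [b [v [Db [Wv ->]]]] [a [u [pa [Wu ->]]]].
      have u0 := Wk_neq0 hW Wu; have v0 := Wk_neq0 hW Wv.
      exists (b * a), (v * u); split; first exact: pabs.
      split; first exact: (WkM hW).
      exact: g_mul.
    split.
      move=> [a [u [pa [Wu e]]]]; apply: (Wnp _ Wu).
      have u0 := Wk_neq0 hW Wu.
      have -> : u = a by apply: (mulIf (invr_neq0 u0)); rewrite mulfV // -e.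
      exact: pa.
    move=> x y /LE [a [u [Da [Wu ->]]]] /LE [b [v [Db [Wv ->]]]] [c [w [pc [Ww e]]]].
    have u0 := Wk_neq0 hW Wu; have v0 := Wk_neq0 hW Wv; have w0 := Wk_neq0 hW Ww.
    have E : a * b * w = c * (u * v).
      by rewrite -[c](divfK w0) -e; apply: g_E.
    have : p (a * b * w).
      by rewrite E mulrC; apply: pabs pc; apply: DM; [exact: (Wk_D Wu)|exact: (Wk_D Wv)].
    case/pprime; [exact: DM|exact: (Wk_D Ww)|move=> pab|by move/(Wnp _ Ww)].
    case/(pprime _ _ Da Db): pab => [pa|pb].
      by left; exists a, u.
    by right; exists b, v.
  have prq' : prime_ideal (loc_dom W) q'.
    case: pQ => [QS [Q0 [QB [Qabs [Q1 Qprime]]]]].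
    split; first by move=> x [].
    split; first by split=> //; apply: (D_L hW); apply: D0.
    split.
      move=> x y [Qx Lx] [Qy Ly]; split; first exact: QB.
      move: Lx Ly => /LE [a [u [Da [Wu ->]]]] /LE [b [v [Db [Wv ->]]]].
      have u0 := Wk_neq0 hW Wu; have v0 := Wk_neq0 hW Wv.
      apply/LE; exists (a * v - b * u), (u * v).
      split; first by apply: DB; apply: DM => //; [exact: (Wk_D Wv)|exact: (Wk_D Wu)].
      split; first exact: (WkM hW).
      exact: g_sub2.
    split.
      move=> s x Ls [Qx Lx]; split; first by apply: Qabs => //; apply: LS.
      move: Ls Lx => /LE [a [u [Da [Wu ->]]]] /LE [b [v [Db [Wv ->]]]].
      have u0 := Wk_neq0 hW Wu; have v0 := Wk_neq0 hW Wv.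
      apply/LE; exists (a * b), (u * v).
      split; first exact: DM.
      split; first exact: (WkM hW).
      exact: g_mul.
    split; first by case.
    move=> x y Lx Ly [Qxy _].
    by case: (Qprime _ _ (LS _ Lx) (LS _ Ly) Qxy) => h; [left|right].
  have sub' : forall x, p' x -> q' x.
    move=> x p'x; split; last exact: p'L.
    case: p'x => [a [y [pa [Wy ->]]]].
    rewrite mulrC; case: pQ => [_ [_ [_ [Qabs _]]]]; apply: Qabs; first exact: WkS.
    by case: ((cQ a).2 (pq_sub _ pa)).
  have cQ' : contracts_to (loc_dom W) Q q' by [].
  have [P [pP [PQ cP]]] := gdS p' q' Q prp' prq' sub' pQ cQ'.
  exists P; split=> //; split=> //.
  move=> x; split.
    move=> [Px Dx]; apply: p'p => //; apply: (cP x).1; split=> //; exact: (D_L hW).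
  move=> px; split; last exact: pD.
  by have := (cP x).2 (pp' _ px); case.
have [U [[UD [U1 [U0 UM]]] SU]] := gp S ovD gdD.
exists U; split.
  by split=> //; move=> t /UD /(D_L hW); apply.
move=> x; split.
  by move/SU => [a [t [Da [Ut ->]]]]; exists a, t; split=> //; apply: (D_L hW).
move=> [a [t [La [Ut ->]]]].
apply: SM; first exact: LS.
apply/SU; exists 1, t; split; first exact: D1.
by split=> //; rewrite div1r.
Qed.
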